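(* For every $n\ge4$, a relation on $\mathcal P$ is $\Sigma_n$-definable in $\mathbf Y^*=\langle\mathcal P,\le,[1]+[1]\rangle$ if and only if it is $\Sigma_n$-definable in $\langle\mathcal P,\le,\pi:\pi\in\mathcal P\rangle$.
   Context: $\mathcal P$ is the set of all integer partitions, including the empty partition; a partition is a nonincreasing finite sequence of positive integers. Young's lattice $\mathbf Y=\langle\mathcal P,\le\rangle$ has $(s_1,\dots,s_r)\le(n_1,\dots,n_t)$ iff $r\le t$ and $s_i\le n_i$ for all $i\le r$; $\mathbf Y^*$ is $\mathbf Y$ with a constant symbol for the partition $(1,1)$, and $\langle\mathcal P,\le,\pi:\pi\in\mathcal P\rangle$ is $\mathbf Y$ expanded by a constant symbol for every partition. A relation is $\Sigma_n$-definable in a structure if it is defined by a first-order formula in the structure's language in prenex form with $n$ alternating quantifier blocks, the outermost existential, and a quantifier-free matrix. *)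

(* Defs.v *)
From mathcomp Require Import all_boot.
Set Implicit Arguments. Unset Strict Implicit. Unset Printing Implicit Defensive.

Definition is_partition (s : seq nat) : bool :=
  sorted geq s && all (fun x => 0 < x) s.

Definition part := {s : seq nat | is_partition s}.

Definition part_le (a b : part) : Prop :=
  let s := proj1_sig a in let t := proj1_sig b in
  (size s <= size t) && all (fun i => nth 0 s i <= nth 0 t i) (iota 0 (size s)).

Definition part_empty : part := exist _ [::] erefl.
Definition part_11 : part := exist _ [:: 1; 1] erefl.

Inductive term (C : Type) : Type :=
  | TVar (i : nat)
  | TCst (c : C).

Inductive qf (C : Type) : Type :=
  | QLe (t1 t2 : term C)
  | QEq (t1 t2 : term C)
  | QNot (q : qf C)
  | QAnd (q1 q2 : qf C)
  | QOr (q1 q2 : qf C).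

Inductive pform (C : Type) : Type :=
  | PQF (q : qf C)
  | PEx (i : nat) (f : pform C)
  | PAll (i : nat) (f : pform C).

Arguments TVar {C}.
Arguments PQF {C}.

Definition is_qf C (f : pform C) : Prop :=
  match f with PQF _ => True | _ => False end.

Fixpoint exblock C (P : pform C -> Prop) (f : pform C) : Prop :=
  P f \/ match f with PEx _ g => exblock P g | _ => False end.
Fixpoint allblock C (P : pform C -> Prop) (f : pform C) : Prop :=
  P f \/ match f with PAll _ g => allblock P g | _ => False end.

Fixpoint is_sigma C (n : nat) (f : pform C) : Prop :=
  match n with
  | 0 => is_qf f
  | m.+1 => exblock (fun g => is_pi_aux m g) f
  end
with is_pi_aux C (n : nat) (f : pform C) : Prop :=
  match n with
  | 0 => is_qf f
  | m.+1 => allblock (fun g => is_sigma m g) f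
  end.

Definition term_free C (i : nat) (t : term C) : bool :=
  match t with TVar j => j == i | TCst _ => false end.

Fixpoint qf_free C (i : nat) (q : qf C) : bool :=
  match q with
  | QLe t1 t2 | QEq t1 t2 => term_free i t1 || term_free i t2
  | QNot q => qf_free i q
  | QAnd q1 q2 | QOr q1 q2 => qf_free i q1 || qf_free i q2
  end.

Fixpoint pform_free C (i : nat) (f : pform C) : bool :=
  match f with
  | PQF q => qf_free i q
  | PEx j g | PAll j g => (j != i) && pform_free i g
  end.

Section Sem.
Variables (C : Type) (I : C -> part).

Definition eval_term (v : nat -> part) (t : term C) : part :=
  match t with TVar i => v i | TCst c => I c end.

Fixpoint sat_qf (v : nat -> part) (q : qf C) : Prop :=
  match q with
  | QLe t1 t2 => part_le (eval_term v t1) (eval_term v t2)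
  | QEq t1 t2 => eval_term v t1 = eval_term v t2
  | QNot q => ~ sat_qf v q
  | QAnd q1 q2 => sat_qf v q1 /\ sat_qf v q2
  | QOr q1 q2 => sat_qf v q1 \/ sat_qf v q2
  end.

Definition upd (v : nat -> part) (i : nat) (a : part) : nat -> part :=
  fun j => if j == i then a else v j.

Fixpoint sat (v : nat -> part) (f : pform C) : Prop :=
  match f with
  | PQF q => sat_qf v q
  | PEx i g => exists a, sat (upd v i a) g
  | PAll i g => forall a, sat (upd v i a) g
  end.

(* valuation induced by a k-tuple (variables >= k are irrelevant, see below) *)
Definition tuple_val (k : nat) (a : 'I_k -> part) : nat -> part :=
  fun j => match insub j with Some j' => a j' | None => part_empty end.

Definition sigma_definable (n k : nat) (R : ('I_k -> part) -> Prop) : Prop :=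
  exists f : pform C,
    is_sigma n f /\ (forall i, pform_free i f -> i < k) /\
    forall a : 'I_k -> part, R a <-> sat (tuple_val a) f.
End Sem.

(* Y^* : one constant symbol, interpreted as (1,1) *)
Definition Ystar_const (_ : unit) : part := part_11.
(* Y expanded by a constant symbol for every partition *)
Definition Yall_const (p : part) : part := p.

(* Main.v *)
Require Import Defs.
From mathcomp Require Import all_boot zify.
From Stdlib Require Import Classical.

Definition pn (a : part) (i : nat) : nat := nth 0 (proj1_sig a) i.

Lemma pn_size a i : (i < size (proj1_sig a)) = (0 < pn a i).
Proof.
rewrite /pn; case: a => s /= /andP [_ Hp].
case: (ltnP i (size s)) => Hi.
  by apply/esym; move/allP: Hp; apply; rewrite mem_nth.
by rewrite nth_default.
Qed.

Lemma pn_mono a i j : i <= j -> pn a j <= pn a i.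
Proof.
move=> Hij; rewrite /pn; case: a => s /= /andP [Hs _].
case: (ltnP j (size s)) => Hj.
  have := sorted_leq_nth (leT := geq) _ _ 0 Hs.
  move=> H; apply: (H _ _ i j) => //.
  - by move=> x y z /= H1 H2; apply: leq_trans H2 H1.
  - by move=> x /=.
  - by apply: leq_ltn_trans Hj.
by rewrite nth_default.
Qed.
Arguments pn_mono a {i j}.

Lemma le_pn a b : part_le a b <-> forall i, pn a i <= pn b i.
Proof.
rewrite /part_le; split.
  move=> /andP [Hs /allP Ha] i.
  case: (ltnP i (size (proj1_sig a))) => Hi.
    by apply: Ha; rewrite mem_iota.
  by rewrite /pn nth_default.
move=> H; apply/andP; split.
  case: (leqP (size (proj1_sig a)) (size (proj1_sig b))) => // Hlt.
  have := H (size (proj1_sig b)).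
  have: 0 < pn a (size (proj1_sig b)) by rewrite -pn_size.
  by rewrite /pn (nth_default 0 (leqnn _)); case: (nth _ _ _).
by apply/allP => i _; apply: H.
Qed.

Lemma eq_pn a b : (forall i, pn a i = pn b i) -> a = b.
Proof.
move=> H.
have Hs: size (proj1_sig a) = size (proj1_sig b).
  apply/eqP; rewrite eqn_leq; apply/andP; split.
  - by case/andP: ((proj2 (le_pn a b)) (fun i => eq_leq (H i))).
  - by case/andP: ((proj2 (le_pn b a)) (fun i => eq_leq (esym (H i)))).
move: a b H Hs => [s Hs'] [t Ht] /= H Hs.
have E : s = t by apply: (eq_from_nth (x0:=0)) => // i _; apply: H.
subst t; congr exist; apply: eq_irrelevance.
Qed.

Lemma le_refl a : part_le a a.
Proof. by apply/le_pn. Qed.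
Lemma le_trans a b c : part_le a b -> part_le b c -> part_le a c.
Proof. move=> /le_pn H1 /le_pn H2; apply/le_pn => i; exact: leq_trans (H1 i) (H2 i). Qed.
Lemma le_anti a b : part_le a b -> part_le b a -> a = b.
Proof.
move=> /le_pn H1 /le_pn H2; apply: eq_pn => i; apply/eqP; rewrite eqn_leq H1 H2 //.
Qed.

Definition rect_s (a b : nat) : seq nat := nseq (if b == 0 then 0 else a) b.
Lemma rect_ok a b : is_partition (rect_s a b).
Proof.
rewrite /is_partition /rect_s; case: b => [|b] //=.
apply/andP; split.
  by elim: a => // [[|a]] //= IH; rewrite leqnn.
by apply/allP => x /nseqP [-> _].
Qed.
Definition rect a b : part := exist _ (rect_s a b) (rect_ok a b).

Lemma pn_rect a b i : pn (rect a b) i = if i < a then b else 0.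
Proof.
rewrite /pn /= /rect_s nth_nseq; case: b => [|b]; first by case: ifP.
by [].
Qed.

Lemma rect_le a b w : part_le (rect a.+1 b) w <-> b <= pn w a.
Proof.
split.
  by move=> /le_pn /(_ a); rewrite pn_rect ltnSn.
move=> H; apply/le_pn => i; rewrite pn_rect; case: ifP => // Hi.
by apply: (leq_trans H); apply: pn_mono; rewrite -ltnS.
Qed.

Lemma bot_le w : part_le (rect 1 0) w.
Proof. by apply/rect_le. Qed.

Definition plt a b := part_le a b /\ a <> b.

Section Chain.
Variables (F : nat -> part) (e : part).
Hypothesis H1 : forall i j, part_le (F i) (F j) <-> i <= j.
Hypothesis H2 : forall y, ~ part_le e y -> exists k, y = F k.
Hypothesis H3 : forall k, ~ part_le e (F k).

Lemma chain_step b y : plt (F b) y -> (forall w, ~ (plt (F b) w /\ plt w y)) ->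
  ~ part_le e y -> y = F b.+1.
Proof.
move=> [Hl Hn] Hw He.
have [k Ek] := H2 _ He; subst y.
have Hbk : b <= k by apply/H1.
have Hbk' : b != k by apply/eqP => E; apply: Hn; rewrite E.
case: (ltnP (b.+1) k) => Hk; last first.
  by have -> : k = b.+1 by lia.
exfalso; apply: (Hw (F b.+1)); split; split.
- by apply/H1.
- by move=> E; move: (proj1 (H1 b.+1 b)); rewrite -E => /(_ (le_refl _)); lia.
- by apply/H1; lia.
- by move=> E; move: (proj1 (H1 k b.+1)); rewrite -E => /(_ (le_refl _)); lia.
Qed.

Lemma chain_cover b : plt (F b) (F b.+1) /\ forall w, ~ (plt (F b) w /\ plt w (F b.+1)).
Proof.
split.
  split; first by apply/H1.
  by move=> E; move: (proj1 (H1 b.+1 b)); rewrite -E => /(_ (le_refl _)); lia.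
move=> w [[Hl Hn] [Hl' Hn']].
have He : ~ part_le e w by move=> H; apply: (H3 b.+1); exact: le_trans H Hl'.
have [k Ek] := H2 _ He; subst w.
have := proj1 (H1 _ _) Hl; have := proj1 (H1 _ _) Hl' => A B.
case: (ltnP b k) => C.
  by apply: Hn'; have -> : k = b.+1 by lia.
by apply: Hn; have -> : k = b by lia.
Qed.
End Chain.

Lemma row_H1 i j : part_le (rect 1 i) (rect 1 j) <-> i <= j.
Proof. by rewrite rect_le pn_rect. Qed.
Lemma row_H2 y : ~ part_le (rect 2 1) y -> exists k, y = rect 1 k.
Proof.
move=> H; exists (pn y 0); apply: eq_pn => i; rewrite pn_rect.
case: i => [|i] //=.
have : pn y 1 = 0 by move: H; rewrite rect_le; case: (pn y 1).
move=> E; apply/eqP; rewrite -leqn0 -E; exact: pn_mono.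
Qed.
Lemma row_H3 k : ~ part_le (rect 2 1) (rect 1 k).
Proof. by rewrite rect_le pn_rect. Qed.

Lemma col_H1 i j : part_le (rect i 1) (rect j 1) <-> i <= j.
Proof.
case: i => [|i]; first by split => // _; apply/le_pn => k; rewrite pn_rect.
by rewrite rect_le pn_rect; case: (i < j).
Qed.
Lemma col_H2 y : ~ part_le (rect 1 2) y -> exists k, y = rect k 1.
Proof.
move=> H; exists (size (proj1_sig y)); apply: eq_pn => i; rewrite pn_rect pn_size.
have : pn y i <= 1.
  apply: (leq_trans (pn_mono y (leq0n i))); move: H; rewrite rect_le; lia.
by case: (pn y i) => [|[|]].
Qed.
Lemma col_H3 k : ~ part_le (rect 1 2) (rect k 1).
Proof. by rewrite rect_le pn_rect; case: ifP. Qed.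

Lemma max_uniq (A : part -> Prop) x z : A x -> (forall w, A w -> part_le w x) ->
  A z -> (forall w, A w -> part_le w z) -> x = z.
Proof. move=> Ax Hx Az Hz; apply: le_anti; [exact: Hz | exact: Hx]. Qed.

Definition Arect a b w := ~ part_le (rect 1 b.+1) w /\ ~ part_le (rect a.+1 1) w.

Lemma Arect_self a b : Arect a b (rect a b).
Proof. by split; rewrite rect_le pn_rect ?ltnn //; case: ifP; lia. Qed.
Lemma Arect_max a b w : Arect a b w -> part_le w (rect a b).
Proof.
move=> [A B]; move: A B; rewrite !rect_le => A B.
apply/le_pn => i; rewrite pn_rect; case: ifP => Hi.
  apply: (leq_trans (pn_mono w (leq0n i))); lia.
apply: (leq_trans (pn_mono w (_ : a <= i))); first lia.
lia.
Qed.

Definition Apart (p : part) w :=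
  forall i, i < (size (proj1_sig p)).+1 -> ~ part_le (rect i.+1 (pn p i).+1) w.

Lemma Apart_self p : Apart p p.
Proof. by move=> i _; rewrite rect_le; lia. Qed.
Lemma Apart_max p w : Apart p w -> part_le w p.
Proof.
move=> H; apply/le_pn => i.
case: (ltnP i (size (proj1_sig p)).+1) => Hi.
  by move: (H i Hi); rewrite rect_le; lia.
set t := size (proj1_sig p).
have : pn w t <= pn p t by move: (H t (ltnSn t)); rewrite rect_le; lia.
have -> : pn p t = 0 by apply/eqP; rewrite -leqn0 leqNgt -pn_size ltnn.
move=> Ht; apply: (leq_trans (pn_mono w (_ : t <= i))); lia.
Qed.

Notation satq := (sat_qf Ystar_const).
Definition V (l : nat) : term unit := TVar l.
Definition cst : term unit := TCst tt.
Definition qtrue : qf unit := QEq cst cst.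
Definition qallr (n : nat) (g : nat -> qf unit) : qf unit :=
  foldr (fun i acc => QAnd (g i) acc) qtrue (iota 0 n).

Lemma sat_qallr v n g : satq v (qallr n g) <-> forall i, i < n -> satq v (g i).
Proof.
rewrite /qallr; suff: forall s, satq v (foldr (fun i acc => QAnd (g i) acc) qtrue (iota s n))
   <-> forall i, s <= i < s + n -> satq v (g i).
  by move=> ->; split => H i Hi; apply: H; lia.
elim: n => [|n IH] s /=; first by split => // _ i; lia.
rewrite IH; split.
  move=> [H0 H] i Hi; case: (ltnP s i) => Hs; first by apply: H; lia.
  by have -> : i = s by lia.
by move=> H; split; [apply: H; lia | move=> i Hi; apply: H; lia].
Qed.

Lemma free_qallr l n g : qf_free l (qallr n g) -> exists2 i, i < n & qf_free l (g i).
Proof.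
rewrite /qallr; suff: forall s, qf_free l (foldr (fun i acc => QAnd (g i) acc) qtrue (iota s n))
   -> exists2 i, s <= i < s + n & qf_free l (g i).
  by move=> H /H [i Hi Hf]; exists i => //; lia.
elim: n => [|n IH] s //=.
case/orP => [H|/IH [i Hi Hf]]; first by exists s => //; lia.
by exists i => //; lia.
Qed.

Definition qlt (x y : term unit) : qf unit := QAnd (QLe x y) (QNot (QEq x y)).
Definition qimp (a b : qf unit) : qf unit := QOr (QNot a) b.

Lemma upd_ne (v : nat -> part) i a j : j != i -> upd v i a j = v j.
Proof. by rewrite /upd => /negbTE ->. Qed.
Lemma upd_eq (v : nat -> part) i a : upd v i a i = a.
Proof. by rewrite /upd eqxx. Qed.

Definition chain (F : nat -> nat) (K : nat) (e : term unit) : qf unit :=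
  QAnd (QLe (V (F 0)) (V 0))
   (qallr K (fun b => QAnd (qlt (V (F b)) (V (F b.+1)))
      (QAnd (QNot (QAnd (qlt (V (F b)) (V 0)) (qlt (V 0) (V (F b.+1)))))
            (QNot (QLe e (V (F b.+1))))))).

Section ChainF.
Variables (F : nat -> nat) (K : nat) (e : term unit) (rho : nat -> part) (E : part)
  (G : nat -> part).
Hypothesis HF : forall b, F b != 0.
Hypothesis He : forall a, eval_term Ystar_const (upd rho 0 a) e = E.
Hypothesis H0 : forall w, part_le (G 0) w.
Hypothesis H1 : forall i j, part_le (G i) (G j) <-> i <= j.
Hypothesis H2 : forall y, ~ part_le E y -> exists k, y = G k.
Hypothesis H3 : forall k, ~ part_le E (G k).

Lemma chain_sem a : satq (upd rho 0 a) (chain F K e) <->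
  part_le (rho (F 0)) a /\ forall b, b < K ->
   plt (rho (F b)) (rho (F b.+1)) /\ ~ (plt (rho (F b)) a /\ plt a (rho (F b.+1)))
   /\ ~ part_le E (rho (F b.+1)).
Proof.
have uF : forall b, upd rho 0 a (F b) = rho (F b) by move=> b; apply: upd_ne.
rewrite /chain /= sat_qallr /= upd_eq He uF.
by rewrite /plt; split => -[A B]; split => // b Hb; move: (B b Hb); rewrite /= !uF.
Qed.

Lemma chain_sound : (forall a, satq (upd rho 0 a) (chain F K e)) ->
  forall b, b <= K -> rho (F b) = G b.
Proof.
move=> H; elim=> [|b IH] Hb.
  apply: le_anti; last exact: H0.
  by have [] := proj1 (chain_sem (G 0)) (H (G 0)).
have IH' := IH (ltnW Hb).
have [_ Hs] := proj1 (chain_sem (G 0)) (H (G 0)).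
have [A [_ C]] := Hs b Hb.
apply: (@chain_step G E H1 H2); first by rewrite -IH'.
  move=> w; have [_ Hs'] := proj1 (chain_sem w) (H w).
  by have [_ [B _]] := Hs' b Hb; rewrite -IH'.
exact: C.
Qed.

Lemma chain_complete : (forall b, b <= K -> rho (F b) = G b) ->
  forall a, satq (upd rho 0 a) (chain F K e).
Proof.
move=> H a; apply/chain_sem; split; first by rewrite H //; apply: H0.
move=> b Hb; rewrite !H // ?(ltnW Hb) //.
have [A B] := @chain_cover G E H1 H2 H3 b.
by split => //; split => //; apply: H3.
Qed.
End ChainF.

Definition maxdef (n : nat) (g : nat -> nat) (x : nat) : qf unit :=
  QAnd (qallr n (fun i => QNot (QLe (V (g i)) (V x))))
       (qimp (qallr n (fun i => QNot (QLe (V (g i)) (V 0)))) (QLe (V 0) (V x))).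

Lemma maxdef_sem n g x rho (A : part -> Prop) :
  (forall i, g i != 0) -> x != 0 ->
  (forall w, A w <-> forall i, i < n -> ~ part_le (rho (g i)) w) ->
  (forall a, satq (upd rho 0 a) (maxdef n g x)) <->
  (A (rho x) /\ forall w, A w -> part_le w (rho x)).
Proof.
move=> Hg Hx HA; split.
  move=> H; split.
    apply: (proj2 (HA _)) => i Hi; have [B _] := H part_empty.
    by have := proj1 (sat_qallr _ _ _) B i Hi; rewrite /= !upd_ne ?Hg.
  move=> w Aw; have [_ B] := H w; case: B => /= B.
    exfalso; apply: B; apply/sat_qallr => i Hi /=; rewrite upd_ne ?Hg // upd_eq.
    exact: (proj1 (HA w) Aw i Hi).
  by move: B; rewrite upd_eq upd_ne.
move=> [Ax Hm] a; split.
  by apply/sat_qallr => i Hi /=; rewrite !upd_ne ?Hg //; exact: (proj1 (HA _) Ax i Hi).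
rewrite /= upd_eq upd_ne //.
case: (classic (satq (upd rho 0 a) (qallr n (fun i => QNot (QLe (V (g i)) (V 0)))))) => C;
  last by left.
right; apply: Hm; apply: (proj2 (HA _)) => i Hi.
by have := proj1 (sat_qallr _ _ _) C i Hi; rewrite /= upd_ne ?Hg // upd_eq.
Qed.

Definition Kr (p : part) := (pn p 0).+2.
Definition Kc (p : part) := (size (proj1_sig p)).+2.
Definition rowi (b : nat) := b.+2.
Definition coli p (a : nat) := (Kr p + a).+3.
Definition recti p (i : nat) := (Kr p + Kc p + i).+4.
Definition LPhi p := (Kr p + Kc p + size (proj1_sig p)).+4.+1.

Definition Phi (p : part) : qf unit :=
  QAnd (chain rowi (Kr p) cst)
  (QAnd (chain (coli p) (Kc p) (V (rowi 2)))
  (QAnd (qallr (size (proj1_sig p)).+1 (fun i =>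
          maxdef 2 (fun k => if k == 0 then rowi (pn p i).+2 else coli p i.+2) (recti p i)))
        (maxdef (size (proj1_sig p)).+1 (recti p) 1))).

Lemma Phi_3 p v : satq v (Phi p) -> satq v (qallr (size (proj1_sig p)).+1 (fun i =>
          maxdef 2 (fun k => if k == 0 then rowi (pn p i).+2 else coli p i.+2) (recti p i))).
Proof. by case=> _ [_ []]. Qed.

Lemma p11 : part_11 = rect 2 1.
Proof. by apply: eq_pn => [[|[|i]]]. Qed.

Lemma rowi0 b : rowi b != 0. Proof. by []. Qed.
Lemma coli0 p a : coli p a != 0. Proof. by []. Qed.
Lemma recti0 p a : recti p a != 0. Proof. by []. Qed.

Lemma bot_row w : part_le (rect 1 0) w. Proof. exact: bot_le. Qed.
Lemma bot_col w : part_le (rect 0 1) w. Proof. by apply/le_pn => i; rewrite pn_rect. Qed.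

Lemma pn_le0 p i : pn p i <= pn p 0.
Proof. exact: pn_mono. Qed.

Lemma rect_eqs p rho :
  (forall b, b <= Kr p -> rho (rowi b) = rect 1 b) ->
  (forall a, a <= Kc p -> rho (coli p a) = rect a 1) ->
  forall i, i < (size (proj1_sig p)).+1 ->
  forall w, Arect i.+1 (pn p i).+1 w <->
   (forall k, k < 2 -> ~ part_le (rho (if k == 0 then rowi (pn p i).+2 else coli p i.+2)) w).
Proof.
move=> Hr Hc i Hi w; rewrite /Arect; split.
  move=> [A B] [|[|k]] // _; first by rewrite Hr // /Kr ltnS ltnS pn_le0.
  by rewrite /= Hc // /Kc.
move=> H; split.
  by have := H 0 erefl; rewrite /= Hr // /Kr ltnS ltnS pn_le0.
by have := H 1 erefl; rewrite /= Hc // /Kc.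
Qed.

Lemma Phi_sound p rho : (forall a, satq (upd rho 0 a) (Phi p)) -> rho 1 = p.
Proof.
move=> H.
have Hrow : forall b, b <= Kr p -> rho (rowi b) = rect 1 b.
  apply: (@chain_sound rowi (Kr p) cst rho (rect 2 1) (fun b => rect 1 b)).
  - exact: rowi0.
  - by move=> a; rewrite /= /Ystar_const p11.
  - exact: bot_row.
  - exact: row_H1.
  - exact: row_H2.
  - by move=> a; case: (H a).
have Hcol : forall a, a <= Kc p -> rho (coli p a) = rect a 1.
  apply: (@chain_sound (coli p) (Kc p) (V (rowi 2)) rho (rect 1 2) (fun a => rect a 1)).
  - exact: coli0.
  - by move=> a /=; rewrite upd_ne // Hrow.
  - exact: bot_col.
  - exact: col_H1.
  - exact: col_H2.
  - by move=> a; case: (H a) => _ [].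
have Hrect : forall i, i < (size (proj1_sig p)).+1 -> rho (recti p i) = rect i.+1 (pn p i).+1.
  move=> i Hi.
  have := proj1 (@maxdef_sem 2 (fun k => if k == 0 then rowi (pn p i).+2 else coli p i.+2)
          (recti p i) rho (Arect i.+1 (pn p i).+1) _ (recti0 p i) (rect_eqs _ _ Hrow Hcol _ Hi)).
  case.
  - by case.
  - move=> a.
    exact: (proj1 (sat_qallr _ _ _) (Phi_3 _ _ (H a)) i Hi).
  move=> A1 A2; apply: (max_uniq _ _ _ A1 A2); [exact: Arect_self | exact: Arect_max].
have := proj1 (@maxdef_sem (size (proj1_sig p)).+1 (recti p) 1 rho (Apart p) (recti0 p) erefl _).
case.
- by move=> w; split => A i Hi; move: (A i Hi); rewrite Hrect.
- by move=> a; case: (H a) => _ [_ []].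
move=> A1 A2; apply: (max_uniq _ _ _ A1 A2); [exact: Apart_self | exact: Apart_max].
Qed.

Definition rho0 p l : part :=
  if l == 1 then p else if l < Kr p + 3 then rect 1 (l - 2)
  else if l < Kr p + Kc p + 4 then rect (l - (Kr p + 3)) 1
  else rect (l - (Kr p + Kc p + 4)).+1 (pn p (l - (Kr p + Kc p + 4))).+1.

Lemma rho0_row p b : b <= Kr p -> rho0 p (rowi b) = rect 1 b.
Proof.
move=> Hb; rewrite /rho0 /rowi; repeat case: ifP => ?; try lia.
congr rect; lia.
Qed.
Lemma rho0_col p a : a <= Kc p -> rho0 p (coli p a) = rect a 1.
Proof.
move=> Hb; rewrite /rho0 /coli; repeat case: ifP => ?; try lia.
congr rect; lia.
Qed.
Lemma rho0_rect p i : rho0 p (recti p i) = rect i.+1 (pn p i).+1.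
Proof.
rewrite /rho0 /recti; repeat case: ifP => ?; try lia.
by have -> : (Kr p + Kc p + i).+4 - (Kr p + Kc p + 4) = i by lia.
Qed.

Lemma Phi_complete p a : satq (upd (rho0 p) 0 a) (Phi p).
Proof.
have Hrow : forall b, b <= Kr p -> rho0 p (rowi b) = rect 1 b by move=> b; apply: rho0_row.
have Hcol : forall a, a <= Kc p -> rho0 p (coli p a) = rect a 1 by move=> b; apply: rho0_col.
split.
  apply: (@chain_complete rowi (Kr p) cst (rho0 p) (rect 2 1) (fun b => rect 1 b)).
  - exact: rowi0.
  - by move=> b; rewrite /= /Ystar_const p11.
  - exact: bot_row.
  - exact: row_H1.
  - exact: row_H2.
  - exact: row_H3.
  - exact: Hrow.
split.
  apply: (@chain_complete (coli p) (Kc p) (V (rowi 2)) (rho0 p) (rect 1 2) (fun a => rect a 1)).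
  - exact: coli0.
  - by move=> b /=; rewrite upd_ne // Hrow.
  - exact: bot_col.
  - exact: col_H1.
  - exact: col_H2.
  - exact: col_H3.
  - exact: Hcol.
split.
  apply/sat_qallr => i Hi.
  have := proj2 (@maxdef_sem 2 (fun k => if k == 0 then rowi (pn p i).+2 else coli p i.+2)
          (recti p i) (rho0 p) (Arect i.+1 (pn p i).+1) _ (recti0 p i) (rect_eqs _ _ Hrow Hcol _ Hi)).
  apply.
  - by case.
  rewrite rho0_rect; split; [exact: Arect_self | exact: Arect_max].
have := proj2 (@maxdef_sem (size (proj1_sig p)).+1 (recti p) 1 (rho0 p) (Apart p) (recti0 p) erefl _).
apply.
- by move=> w; split => A i Hi; move: (A i Hi); rewrite rho0_rect.
by rewrite /rho0 /=; split; [exact: Apart_self | exact: Apart_max].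
Qed.

Lemma chain_free F K e l : qf_free l (chain F K e) ->
  [\/ l = 0, exists2 b, b <= K & l = F b | term_free l e].
Proof.
rewrite /chain /= => /orP [/orP [/eqP <-|/eqP <-]|]; first by constructor 2; exists 0.
  by constructor 1.
case/free_qallr => b Hb /=.
move=> /orP [/orP [/orP [/eqP <- | /eqP <-] | /orP [/eqP <- | /eqP <-]] |].
- by constructor 2; exists b => //; apply: ltnW.
- by constructor 2; exists b.+1.
- by constructor 2; exists b => //; apply: ltnW.
- by constructor 2; exists b.+1.
move=> /orP [/orP [/orP [/orP [/eqP <- | /eqP <-] | /orP [/eqP <- | /eqP <-]] |
   /orP [/orP [/eqP <- | /eqP <-] | /orP [/eqP <- | /eqP <-]]] | /orP [H|/eqP <-]].
- by constructor 2; exists b => //; apply: ltnW.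
- by constructor 1.
- by constructor 2; exists b => //; apply: ltnW.
- by constructor 1.
- by constructor 1.
- by constructor 2; exists b.+1.
- by constructor 1.
- by constructor 2; exists b.+1.
- by constructor 3.
- by constructor 2; exists b.+1.
Qed.

Lemma maxdef_free n g x l : qf_free l (maxdef n g x) ->
  [\/ l = 0, l = x | exists2 i, i < n & l = g i].
Proof.
rewrite /maxdef /= => /orP [|/orP [|]].
- case/free_qallr => i Hi /= /orP [/eqP <-|/eqP <-]; last by constructor 2.
  by constructor 3; exists i.
- case/free_qallr => i Hi /= /orP [/eqP <-|/eqP <-]; last by constructor 1.
  by constructor 3; exists i.
- by move=> /orP [/eqP <-|/eqP <-]; [constructor 1 | constructor 2].
Qed.

Lemma Phi_free p l : qf_free l (Phi p) -> 0 < l -> l < LPhi p.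
Proof.
have Ht : forall i, i < (size (proj1_sig p)).+1 -> pn p i <= pn p 0 by move=> i _; apply: pn_le0.
move=> /orP [Hl|/orP [Hl|/orP [Hl|Hl]]] Hpos; rewrite /LPhi /Kr /Kc.
- case: (chain_free rowi (Kr p) cst l Hl) => [->|[b Hb ->]|] //.
  by rewrite /Kr in Hb; rewrite /rowi; lia.
- case: (chain_free (coli p) (Kc p) (V (rowi 2)) l Hl) => [->|[b Hb ->]|] //=.
    by rewrite /Kc in Hb; rewrite /coli /Kr /Kc; lia.
  by move/eqP <-; rewrite /rowi; lia.
- case: (free_qallr l (size (proj1_sig p)).+1 (fun i =>
          maxdef 2 (fun k => if k == 0 then rowi (pn p i).+2 else coli p i.+2) (recti p i)) Hl).
  move=> i Hi /(maxdef_free _ _ _ _) [->|->|[k Hk ->]] //.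
    by rewrite /recti /Kr /Kc; lia.
  have := Ht i Hi.
  by case: k Hk => [|k] Hk /=; rewrite /rowi /coli /Kr /Kc; lia.
- by case: (maxdef_free (size (proj1_sig p)).+1 (recti p) 1 l Hl) => [->|->|[k Hk ->]] //; rewrite /recti /Kr /Kc; lia.
Qed.

Set Implicit Arguments. Unset Strict Implicit.

Fixpoint pfmap (C D : Type) (h : qf C -> qf D) (f : pform C) : pform D :=
  match f with
  | PQF q => PQF (h q)
  | PEx i g => PEx i (pfmap h g)
  | PAll i g => PAll i (pfmap h g)
  end.

Lemma pfmap_class C D (h : qf C -> qf D) n :
  (forall f, is_sigma n f -> is_sigma n (pfmap h f)) /\
  (forall f, is_pi_aux n f -> is_pi_aux n (pfmap h f)).
Proof.
elim: n => [|n [IHs IHp]]; first by split => -[].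
split.
  elim=> [q|i g IH|i g IH] /=.
  - by case => // H; left; exact: (IHp _ H).
  - by case => H; [left; exact: (IHp _ H) | right; exact: (IH H)].
  - by case => // H; left; exact: (IHp _ H).
elim=> [q|i g IH|i g IH] /=.
- by case => // H; left; exact: (IHs _ H).
- by case => // H; left; exact: (IHs _ H).
- by case => H; [left; exact: (IHs _ H) | right; exact: (IH H)].
Qed.

Lemma class_mono C n :
  (forall f : pform C, is_sigma n f -> is_sigma n.+1 f) /\
  (forall f : pform C, is_pi_aux n f -> is_pi_aux n.+1 f).
Proof.
elim: n => [|n [IHs IHp]].
  by split => -[q|i g|i g] H; left.
split.
  elim=> [q|i g IH|i g IH] /=.
  - by case => // H; left; exact: (IHp _ H).
  - by case => H; [left; exact: (IHp _ H) | right; exact: (IH H)].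
  - by case => // H; left; exact: (IHp _ H).
elim=> [q|i g IH|i g IH] /=.
- by case => // H; left; exact: (IHs _ H).
- by case => // H; left; exact: (IHs _ H).
- by case => H; [left; exact: (IHs _ H) | right; exact: (IH H)].
Qed.

Lemma qf_class C n (q : qf C) : is_sigma n (PQF q) /\ is_pi_aux n (PQF q).
Proof. by elim: n => [|n [A B]] //=; split; left. Qed.

Lemma sig_ex C n : forall i (g : pform C), is_sigma n (PEx i g) -> is_sigma n g.
Proof.
elim: n {-2}n (leqnn n) => [|M IH] n Hn i g; first by case: n Hn.
case: n Hn => [|n] Hn //. case => [|H]; last exact H.
case: n Hn => [|n] Hn //. case => // H.
have H' := IH n ltac:(lia) i g H.
apply: (proj1 (class_mono C n.+1)); apply: (proj1 (class_mono C n)); exact: H'.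
Qed.

Section Agree.
Variables (Cc : Type) (I : Cc -> part).

Lemma eval_agree u u' (t : term Cc) : (forall i, term_free i t -> u i = u' i) ->
  eval_term I u t = eval_term I u' t.
Proof. by case: t => [j|c] //= H; apply: H; rewrite /= eqxx. Qed.

Lemma satq_agree u u' (q : qf Cc) : (forall i, qf_free i q -> u i = u' i) ->
  sat_qf I u q <-> sat_qf I u' q.
Proof.
elim: q => [t1 t2|t1 t2|q IH|q1 IH1 q2 IH2|q1 IH1 q2 IH2] /= H.
- rewrite (@eval_agree u u' t1) ?(@eval_agree u u' t2) // => i Hi; apply: H; rewrite Hi ?orbT //.
- rewrite (@eval_agree u u' t1) ?(@eval_agree u u' t2) // => i Hi; apply: H; rewrite Hi ?orbT //.
- by rewrite IH.
- by rewrite IH1 ?IH2 // => i Hi; apply: H; rewrite Hi ?orbT.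
- by rewrite IH1 ?IH2 // => i Hi; apply: H; rewrite Hi ?orbT.
Qed.

Lemma sat_agree (f : pform Cc) : forall u u', (forall i, pform_free i f -> u i = u' i) ->
  sat I u f <-> sat I u' f.
Proof.
elim: f => [q|j g IH|j g IH] u u' H /=.
- exact: satq_agree.
- split => -[a Ha]; exists a; (apply/IH; last exact Ha) => i Hi; rewrite /upd;
    case: eqP => // /eqP Hne; [apply/esym|]; apply: H => /=; rewrite eq_sym Hne //.
- split => Ha a; (apply/IH; last exact (Ha a)) => i Hi; rewrite /upd;
    case: eqP => // /eqP Hne; [apply/esym|]; apply: H => /=; rewrite eq_sym Hne //.
Qed.

Definition exs (X : seq nat) (g : pform Cc) : pform Cc := foldr (fun i h => PEx i h) g X.

Lemma sat_exs X g v : sat I v (exs X g) <->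
  exists v', (forall i, i \notin X -> v' i = v i) /\ sat I v' g.
Proof.
elim: X v => [|x X IH] v /=.
  by split => [H|[v' [E H]]]; [exists v | apply/(sat_agree (u:=v')) => // i _; apply: E].
split.
  move=> [a /IH [v' [E H]]]; exists v'; split => // i; rewrite in_cons negb_or => /andP [Hx Hi].
  by rewrite E // /upd (negbTE Hx).
move=> [v' [E H]]; exists (v' x); apply/IH; exists v'; split => // i Hi.
rewrite /upd; case: eqP => [->//|/eqP Hx]; apply: E; by rewrite in_cons negb_or Hx.
Qed.

Lemma free_exs X g i : pform_free i (exs X g) -> i \notin X /\ pform_free i g.
Proof.
elim: X => [|x X IH] //= /andP [Hx /IH [H1 H2]]; split => //.
by rewrite in_cons negb_or eq_sym Hx.
Qed.

Lemma exs_sigma n X g : is_sigma n.+1 g -> is_sigma n.+1 (exs X g).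
Proof. by elim: X => [|x X IH] //= H; right; apply: IH. Qed.

Lemma pfmap_sat (D : Type) (J : D -> part) (h : qf D -> qf Cc) :
  (forall u q, sat_qf I u (h q) <-> sat_qf J u q) ->
  forall f v, sat I v (pfmap h f) <-> sat J v f.
Proof.
move=> Hh; elim => [q|i g IH|i g IH] v /=; first exact: Hh.
- by split => -[a Ha]; exists a; apply/IH.
- by split => Ha a; apply/IH.
Qed.

Lemma pfmap_free (D : Type) (h : qf D -> qf Cc) :
  (forall q i, qf_free i (h q) = qf_free i q) ->
  forall f i, pform_free i (pfmap h f) = pform_free i f.
Proof. by move=> Hh; elim => [q|j g IH|j g IH] i /=; rewrite ?Hh ?IH. Qed.
End Agree.

Definition rent (r : nat -> nat) (t : term unit) : term unit :=
  match t with TVar i => TVar (r i) | TCst c => TCst c end.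
Fixpoint renq (r : nat -> nat) (q : qf unit) : qf unit :=
  match q with
  | QLe t1 t2 => QLe (rent r t1) (rent r t2)
  | QEq t1 t2 => QEq (rent r t1) (rent r t2)
  | QNot q => QNot (renq r q)
  | QAnd q1 q2 => QAnd (renq r q1) (renq r q2)
  | QOr q1 q2 => QOr (renq r q1) (renq r q2)
  end.

Lemma sat_renq r u q : satq u (renq r q) <-> satq (fun l => u (r l)) q.
Proof.
have Ht : forall t, eval_term Ystar_const u (rent r t) = eval_term Ystar_const (fun l => u (r l)) t.
  by case.
by elim: q => [t1 t2|t1 t2|q IH|q1 IH1 q2 IH2|q1 IH1 q2 IH2] /=; rewrite ?Ht ?IH ?IH1 ?IH2.
Qed.

Lemma free_renq r q i : qf_free i (renq r q) -> exists2 l, qf_free l q & i = r l.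
Proof.
have Ht : forall t, term_free i (rent r t) -> exists2 l, term_free l t & i = r l.
  by case => [j|c] //= /eqP <-; exists j => //=.
elim: q => [t1 t2|t1 t2|q IH|q1 IH1 q2 IH2|q1 IH1 q2 IH2] /=.
- by case/orP => /Ht [l Hl ->]; exists l => //; apply/orP; by [left|right].
- by case/orP => /Ht [l Hl ->]; exists l => //; apply/orP; by [left|right].
- exact: IH.
- by case/orP => [/IH1|/IH2] [l Hl ->]; exists l => //; apply/orP; by [left|right].
- by case/orP => [/IH1|/IH2] [l Hl ->]; exists l => //; apply/orP; by [left|right].
Qed.

Set Implicit Arguments. Unset Strict Implicit.

Definition tcon (C : Type) (t : term C) : seq C := match t with TVar _ => [::] | TCst c => [:: c] end.
Fixpoint qcon (C : Type) (q : qf C) : seq C :=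
  match q with
  | QLe t1 t2 | QEq t1 t2 => tcon t1 ++ tcon t2
  | QNot q => qcon q
  | QAnd q1 q2 | QOr q1 q2 => qcon q1 ++ qcon q2
  end.
Fixpoint pcon (C : Type) (f : pform C) : seq C :=
  match f with PQF q => qcon q | PEx _ g | PAll _ g => pcon g end.

Definition tmax (C : Type) (t : term C) : nat := match t with TVar i => i | TCst _ => 0 end.
Fixpoint qmax (C : Type) (q : qf C) : nat :=
  match q with
  | QLe t1 t2 | QEq t1 t2 => maxn (tmax t1) (tmax t2)
  | QNot q => qmax q
  | QAnd q1 q2 | QOr q1 q2 => maxn (qmax q1) (qmax q2)
  end.
Fixpoint pmax (C : Type) (f : pform C) : nat :=
  match f with PQF q => qmax q | PEx i g | PAll i g => maxn i (pmax g) end.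

Lemma qfree_max C i (q : qf C) : qf_free i q -> i <= qmax q.
Proof.
have Ht : forall t : term C, term_free i t -> i <= tmax t by case => //= j /eqP ->.
elim: q => [t1 t2|t1 t2|q IH|q1 IH1 q2 IH2|q1 IH1 q2 IH2] /=;
  try (by case/orP => [/Ht|/Ht]; lia); try (by case/orP => [/IH1|/IH2]; lia).
exact: IH.
Qed.

Lemma pfree_max C i (f : pform C) : pform_free i f -> i <= pmax f.
Proof.
elim: f => [q|j g IH|j g IH] /=; first exact: qfree_max.
- by case/andP => _ /IH; lia.
- by case/andP => _ /IH; lia.
Qed.

Section Conv.
Variables (N : nat) (cs : seq part).

Definition convt (t : term part) : term unit :=
  match t with TVar i => TVar i | TCst c => TVar (N.+1 + index c cs) end.
Fixpoint convq (q : qf part) : qf unit :=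
  match q with
  | QLe t1 t2 => QLe (convt t1) (convt t2)
  | QEq t1 t2 => QEq (convt t1) (convt t2)
  | QNot q => QNot (convq q)
  | QAnd q1 q2 => QAnd (convq q1) (convq q2)
  | QOr q1 q2 => QOr (convq q1) (convq q2)
  end.

Lemma sat_convq u q : (forall j, j < size cs -> u (N.+1 + j) = nth part_empty cs j) ->
  {subset qcon q <= cs} ->
  satq u (convq q) <-> sat_qf Yall_const u q.
Proof.
move=> Hu.
have Ht : forall t, {subset tcon t <= cs} ->
   eval_term Ystar_const u (convt t) = eval_term Yall_const u t.
  case => [j|c] //= Hc.
  have Hc' : c \in cs by apply: Hc; rewrite inE.
  by rewrite Hu ?index_mem // nth_index.
elim: q => [t1 t2|t1 t2|q IH|q1 IH1 q2 IH2|q1 IH1 q2 IH2] /= Hs.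
- rewrite !Ht // => c Hc; apply: Hs; rewrite mem_cat Hc ?orbT //.
- rewrite !Ht // => c Hc; apply: Hs; rewrite mem_cat Hc ?orbT //.
- by rewrite IH.
- rewrite IH1 ?IH2 // => c Hc; apply: Hs; rewrite mem_cat Hc ?orbT //.
- rewrite IH1 ?IH2 // => c Hc; apply: Hs; rewrite mem_cat Hc ?orbT //.
Qed.

Lemma sat_conv (f : pform part) : pmax f < N -> {subset pcon f <= cs} ->
  forall u, (forall j, j < size cs -> u (N.+1 + j) = nth part_empty cs j) ->
  sat Ystar_const u (pfmap convq f) <-> sat Yall_const u f.
Proof.
elim: f => [q|i g IH|i g IH] /= Hm Hs u Hu; first exact: sat_convq.
- split => -[a Ha]; exists a; [apply/IH|apply/IH] => //; try lia;
   move=> j Hj; rewrite /upd; case: eqP => [|_]; try lia; exact: Hu.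
- split => Ha a; [apply/IH|apply/IH] => //; try lia;
   move=> j Hj; rewrite /upd; case: eqP => [|_]; try lia; exact: Hu.
Qed.

Lemma free_convq q i : {subset qcon q <= cs} -> qf_free i (convq q) ->
  qf_free i q \/ N.+1 <= i < N.+1 + size cs.
Proof.
have Ht : forall t, {subset tcon t <= cs} -> term_free i (convt t) ->
    term_free i t \/ N.+1 <= i < N.+1 + size cs.
  case => [j|c] //= Hc /eqP <-; first by left.
  have Hc' : c \in cs by apply: Hc; rewrite inE.
  by right; rewrite -index_mem in Hc'; rewrite ltn_add2l Hc' andbT ltnS leq_addr.
elim: q => [t1 t2|t1 t2|q IH|q1 IH1 q2 IH2|q1 IH1 q2 IH2] Hs.
- have Hs1 : {subset tcon t1 <= cs} by move=> c Hc; apply: Hs; rewrite /= mem_cat Hc.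
  have Hs2 : {subset tcon t2 <= cs} by move=> c Hc; apply: Hs; rewrite /= mem_cat Hc orbT.
  case/orP => [/(Ht _ Hs1)|/(Ht _ Hs2)] [H|H]; try (by right);
    [left; apply/orP; left | left; apply/orP; right] => //.
- have Hs1 : {subset tcon t1 <= cs} by move=> c Hc; apply: Hs; rewrite /= mem_cat Hc.
  have Hs2 : {subset tcon t2 <= cs} by move=> c Hc; apply: Hs; rewrite /= mem_cat Hc orbT.
  case/orP => [/(Ht _ Hs1)|/(Ht _ Hs2)] [H|H]; try (by right);
    [left; apply/orP; left | left; apply/orP; right] => //.
- exact: IH.
- have Hs1 : {subset qcon q1 <= cs} by move=> c Hc; apply: Hs; rewrite /= mem_cat Hc.
  have Hs2 : {subset qcon q2 <= cs} by move=> c Hc; apply: Hs; rewrite /= mem_cat Hc orbT.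
  case/orP => [/(IH1 Hs1)|/(IH2 Hs2)] [H|H]; try (by right);
    [left; apply/orP; left | left; apply/orP; right] => //.
- have Hs1 : {subset qcon q1 <= cs} by move=> c Hc; apply: Hs; rewrite /= mem_cat Hc.
  have Hs2 : {subset qcon q2 <= cs} by move=> c Hc; apply: Hs; rewrite /= mem_cat Hc orbT.
  case/orP => [/(IH1 Hs1)|/(IH2 Hs2)] [H|H]; try (by right);
    [left; apply/orP; left | left; apply/orP; right] => //.
Qed.
End Conv.

Set Implicit Arguments. Unset Strict Implicit.

Section Glob.
Variables (N : nat) (cs : seq part).

Definition Lg := foldr (fun c acc => maxn (LPhi c) acc) 1 cs.
Lemma Lg_pos : 0 < Lg.
Proof. rewrite /Lg; elim: cs => //= c s IH; lia. Qed.
Lemma Lg_ge j : j < size cs -> LPhi (nth part_empty cs j) <= Lg.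
Proof.
rewrite /Lg; elim: cs j => [|c s IH] [|j] //= Hj; first lia.
have := IH j Hj; lia.
Qed.

Definition rj (j l : nat) := if l == 0 then N else N.+1 + (l.-1 * size cs + j).
Definition Qg : qf unit :=
  qallr (size cs) (fun j => renq (rj j) (Phi (nth part_empty cs j))).
Definition Xg : seq nat := iota N.+1 (Lg * size cs).

Lemma rj_inX j l : j < size cs -> 0 < l < Lg.+1 -> rj j l \in Xg.
Proof.
move=> Hj Hl; rewrite /rj /Xg mem_iota.
case: l Hl => [|l] //= Hl; apply/andP; split; first lia.
rewrite ltn_add2l; apply: (@leq_trans (l * size cs + size cs)); first lia.
have : l.+1 * size cs <= Lg * size cs by apply: leq_mul; lia.
by rewrite mulSn addnC.
Qed.

Lemma Qg_free i : qf_free i Qg -> i = N \/ i \in Xg.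
Proof.
case/free_qallr => j Hj /free_renq [l Hl ->].
case: (posnP l) => [->|Hl0]; first by left.
right; apply: rj_inX => //; apply/andP; split => //.
have := Phi_free _ _ Hl Hl0; have := Lg_ge Hj; lia.
Qed.

Lemma Qg_ge i : qf_free i Qg -> N <= i.
Proof. by case/Qg_free => [->//|]; rewrite /Xg mem_iota; lia. Qed.

Lemma Qg_sound u : (forall a, satq (upd u N a) Qg) ->
  forall j, j < size cs -> u (N.+1 + j) = nth part_empty cs j.
Proof.
move=> H j Hj.
have : rj j 1 = N.+1 + j by rewrite /rj /= mul0n add0n.
move=> <-; apply: (@Phi_sound _ (fun l => u (rj j l))) => a.
have := proj1 (sat_qallr _ _ _) (H a) j Hj => /sat_renq H2.
apply: (proj1 (satq_agree Ystar_const _) H2) => l _.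
case: (l =P 0) => [->|/eqP Hl]; first by rewrite /rj /= !upd_eq.
have HrN : rj j l != N by rewrite /rj (negbTE Hl); apply/eqP; nia.
by rewrite (upd_ne _ _ _ _ HrN) (upd_ne _ _ _ _ Hl).
Qed.

Definition uext (u : nat -> part) i : part :=
  if (N.+1 <= i) && (i < N.+1 + Lg * size cs) then
    rho0 (nth part_empty cs ((i - N.+1) %% size cs)) ((i - N.+1) %/ size cs).+1
  else u i.

Lemma Qg_complete u : (forall i, i \notin Xg -> uext u i = u i) /\
  forall a, satq (upd (uext u) N a) Qg.
Proof.
split.
  by move=> i; rewrite /Xg mem_iota /uext => /negbTE ->.
move=> a; apply/sat_qallr => j Hj; apply/sat_renq.
apply: (proj1 (satq_agree Ystar_const _) (Phi_complete (nth part_empty cs j) a)) => l Hfree.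
case: (l =P 0) => [->|/eqP Hl]; first by rewrite /rj /= !upd_eq.
have Hpos : 0 < l by lia.
have HL := Phi_free _ _ Hfree Hpos; have HG := Lg_ge Hj.
have Hin := @rj_inX j l Hj ltac:(lia).
have HrN : rj j l != N by rewrite /rj (negbTE Hl); apply/eqP; nia.
rewrite (upd_ne _ _ _ _ HrN) (upd_ne _ _ _ _ Hl).
rewrite /rj (negbTE Hl) in Hin *.
rewrite /uext; move: Hin; rewrite /Xg mem_iota => ->.
rewrite addKn.
have Hm : 0 < size cs by lia.
rewrite modnMDl (modn_small Hj) divnMDl // divn_small // addn0.
by have -> : l.-1.+1 = l by lia.
Qed.

Definition addQ (f : pform part) : pform unit := pfmap (fun q => QAnd Qg (convq N cs q)) f.

Lemma sat_addQ (f : pform part) : pmax f < N -> forall u,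
  sat Ystar_const u (addQ f) <-> satq u Qg /\ sat Ystar_const u (pfmap (convq N cs) f).
Proof.
elim: f => [q|i g IH|i g IH] /= Hm u; first by [].
- have HQ : forall a, satq (upd u i a) Qg <-> satq u Qg.
    move=> a; apply: satq_agree => l /Qg_ge Hl; rewrite /upd; case: eqP => //; lia.
  split.
    move=> [a /IH [] //]; first lia.
    by move=> /HQ Q S; split => //; exists a.
  move=> [Q [a S]]; exists a; apply/IH; first lia.
  by split => //; apply/HQ.
- have HQ : forall a, satq (upd u i a) Qg <-> satq u Qg.
    move=> a; apply: satq_agree => l /Qg_ge Hl; rewrite /upd; case: eqP => //; lia.
  split.
    move=> H; split; first by have := proj1 (IH ltac:(lia) _) (H part_empty) => -[/HQ].
    by move=> a; have := proj1 (IH ltac:(lia) _) (H a) => -[].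
  move=> [Q S] a; apply/IH; first lia.
  by split => //; apply/HQ.
Qed.

Lemma free_addQ (f : pform part) i : {subset pcon f <= cs} -> pform_free i (addQ f) ->
  qf_free i Qg \/ (pform_free i f \/ N.+1 <= i < N.+1 + size cs).
Proof.
elim: f => [q|j g IH|j g IH] /= Hs.
- case/orP => [H|H]; [by left | right]; exact: free_convq.
- case/andP => Hj /(IH Hs) [H|[H|H]]; [by left | by right; left; apply/andP | by right; right].
- case/andP => Hj /(IH Hs) [H|[H|H]]; [by left | by right; left; apply/andP | by right; right].
Qed.

Lemma base_sat (f : pform part) : pmax f < N -> {subset pcon f <= cs} -> forall v,
  sat Ystar_const v (exs Xg (PAll N (addQ f))) <-> sat Yall_const v f.
Proof.
move=> Hm Hs v; rewrite sat_exs /=; split.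
  move=> [v' [E H]].
  have Hs' : forall j, j < size cs -> v' (N.+1 + j) = nth part_empty cs j.
    by apply: Qg_sound => a; case: (proj1 (sat_addQ Hm _) (H a)).
  have := proj2 (proj1 (sat_addQ Hm _) (H part_empty)).
  move/(sat_conv Hm Hs) => /(_ _) H1.
  have H2 := H1 ltac:(by move=> j Hj; rewrite /upd; case: eqP => [|_]; [lia | apply: Hs']).
  apply: (proj1 (sat_agree Yall_const _) H2) => i Hi.
  have := pfree_max Hi => Hi'.
  rewrite /upd; case: eqP => [|_]; first lia.
  by apply: E; rewrite /Xg mem_iota; lia.
move=> H.
have [E Q] := Qg_complete v.
exists (uext v); split => // a; apply/sat_addQ => //; split => //.
have Hs' := Qg_sound Q.
apply/(sat_conv Hm Hs).
  by move=> j Hj; rewrite /upd; case: eqP => [|_]; [lia | apply: Hs'].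
apply: (proj1 (sat_agree Yall_const _) H) => i Hi.
have := pfree_max Hi => Hi'.
rewrite /upd; case: eqP => [|_]; first lia.
by apply/esym; apply: E; rewrite /Xg mem_iota; lia.
Qed.

Fixpoint ins (f : pform part) : pform unit :=
  match f with
  | PEx i g => PEx i (ins g)
  | _ => exs Xg (PAll N (addQ f))
  end.

Lemma ins_sat (f : pform part) : pmax f < N -> {subset pcon f <= cs} -> forall v,
  sat Ystar_const v (ins f) <-> sat Yall_const v f.
Proof.
elim: f => [q|i g IH|i g IH] Hm Hs v; try exact: base_sat.
move: Hm Hs => /= Hm Hs; have Hm' : pmax g < N by lia.
by split => -[a Ha]; exists a; apply/IH.
Qed.

Lemma ins_free (f : pform part) i : {subset pcon f <= cs} -> pform_free i (ins f) -> pform_free i f.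
Proof.
have Hb : forall g, {subset pcon g <= cs} -> pform_free i (exs Xg (PAll N (addQ g))) -> pform_free i g.
  move=> g Hs /free_exs [HX /= /andP [HN /(free_addQ Hs) [/Qg_free [E|E]|[//|H]]]].
  - by move: HN; rewrite E eqxx.
  - by rewrite E in HX.
  exfalso; move/negP: HX; apply; rewrite /Xg mem_iota.
  have := Lg_pos; move: H => /andP [H1 H2] P; apply/andP; split => //.
  apply: (leq_trans H2); rewrite leq_add2l; apply: leq_pmull; lia.
elim: f => [q|j g IH|j g IH] Hs; try exact: Hb.
by rewrite /= => /andP [H1 /(IH Hs) H2]; rewrite H1 H2.
Qed.

Lemma ins_sigma n (f : pform part) : 0 < n -> is_sigma n.+1 f -> is_sigma n.+1 (ins f).
Proof.
case: n => [|n] // _; elim: f => [q|i g IH|i g IH].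
- move=> _; apply: (@exs_sigma _ n.+1 Xg (PAll N (addQ (PQF q)))); left; right; left; exact: (proj1 (qf_class n _)).
- by move=> /sig_ex H; right; apply: IH.
- case => // H; apply: (@exs_sigma _ n.+1 Xg (PAll N (addQ (PAll i g)))); left; right.
  exact: (proj2 (pfmap_class (fun q => QAnd Qg (convq N cs q)) n.+1) (PAll i g) H).
Qed.
End Glob.

Set Implicit Arguments. Unset Strict Implicit.

Definition cmt (t : term unit) : term part :=
  match t with TVar i => TVar i | TCst _ => TCst part_11 end.
Fixpoint cmq (q : qf unit) : qf part :=
  match q with
  | QLe t1 t2 => QLe (cmt t1) (cmt t2)
  | QEq t1 t2 => QEq (cmt t1) (cmt t2)
  | QNot q => QNot (cmq q)
  | QAnd q1 q2 => QAnd (cmq q1) (cmq q2)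
  | QOr q1 q2 => QOr (cmq q1) (cmq q2)
  end.

Lemma cmq_free q i : qf_free i (cmq q) = qf_free i q.
Proof.
have Ht : forall t, term_free i (cmt t) = term_free i t by case.
by elim: q => [t1 t2|t1 t2|q IH|q1 IH1 q2 IH2|q1 IH1 q2 IH2] /=; rewrite ?Ht ?IH ?IH1 ?IH2.
Qed.

Lemma cmq_sat u q : sat_qf Yall_const u (cmq q) <-> sat_qf Ystar_const u q.
Proof.
have Ht : forall t, eval_term Yall_const u (cmt t) = eval_term Ystar_const u t by case.
by elim: q => [t1 t2|t1 t2|q IH|q1 IH1 q2 IH2|q1 IH1 q2 IH2] /=; rewrite ?Ht ?IH ?IH1 ?IH2.
Qed.

Theorem corollary5p2 :
  forall n : nat, 4 <= n ->
  forall (k : nat) (R : ('I_k -> part) -> Prop),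
    sigma_definable Ystar_const n R <-> sigma_definable Yall_const n R.
Proof.
move=> n Hn k R; split.
  move=> [f [Hs [Hf HR]]]; exists (pfmap cmq f); split.
    exact: (proj1 (pfmap_class cmq n) f Hs).
  split.
    by move=> i; rewrite (pfmap_free cmq_free); apply: Hf.
  move=> a; rewrite HR; exact: iff_sym (pfmap_sat cmq_sat f _).
move=> [f [Hs [Hf HR]]].
exists (ins (pmax f).+1 (pcon f) f); split.
  case: n Hn Hs => [|n] // Hn Hs; apply: ins_sigma => //; lia.
split.
  by move=> i /(ins_free (fun c (H : c \in pcon f) => H)); apply: Hf.
move=> a; rewrite HR; exact: iff_sym (@ins_sat (pmax f).+1 (pcon f) f (ltnSn _) (fun c H => H) _).
Qed.
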